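(* Let $\mathfrak C$ be a finitely complete category and let $\Phi\colon\mathcal H\to\mathcal K$ be an effective descent morphism in $\mathbf{Cat}(\mathfrak C)$ such that $\Phi_1$ is an effective descent morphism in $\mathfrak C$. Then discrete opfibrations descend along $\Phi$: if $p\colon\mathcal X\to\mathcal K$ is an internal functor whose pullback $p'\colon\mathcal X'\to\mathcal H$ along $\Phi$ is a discrete opfibration, then $p$ is a discrete opfibration.
   Context: $\mathbf{Cat}(\mathfrak C)$ is the category of internal categories and internal functors in $\mathfrak C$. An internal functor $p\colon\mathcal X\to\mathcal K$ is a discrete opfibration if the square formed by $s\colon X_1\to X_0$, $p_1\colon X_1\to K_1$, $p_0\colon X_0\to K_0$ and $s\colon K_1\to K_0$ is a pullback. Effective descent morphisms are those along which pullback induces an equivalence between objects over the codomain and objects over the domain equipped with descent data for the kernel pair. *)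

(* Defs.v *)
From Stdlib Require Import ProofIrrelevance.

Record Category := {
  Ob :> Type;
  Hom : Ob -> Ob -> Type;
  idm : forall a, Hom a a;
  comp : forall a b c, Hom b c -> Hom a b -> Hom a c;
  comp_assoc : forall a b c d (h : Hom c d) (g : Hom b c) (f : Hom a b),
      comp _ _ _ h (comp _ _ _ g f) = comp _ _ _ (comp _ _ _ h g) f;
  comp_id_l : forall a b (f : Hom a b), comp _ _ _ (idm b) f = f;
  comp_id_r : forall a b (f : Hom a b), comp _ _ _ f (idm a) = f }.

Arguments Hom {_} _ _.
Arguments idm {_} _.
Arguments comp {_ _ _ _} _ _.
Arguments comp_assoc {_ _ _ _ _} _ _ _.
Arguments comp_id_l {_ _ _} _.
Arguments comp_id_r {_ _ _} _.

Notation "g ∘ f" := (comp g f) (at level 40, left associativity).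

Definition is_pullback {C : Category} {P A B Z : C}
  (pa : Hom P A) (pb : Hom P B) (f : Hom A Z) (g : Hom B Z) : Prop :=
  f ∘ pa = g ∘ pb /\
  forall (T : C) (x : Hom T A) (y : Hom T B), f ∘ x = g ∘ y ->
    exists! u : Hom T P, pa ∘ u = x /\ pb ∘ u = y.

Definition is_terminal {C : Category} (T : C) : Prop :=
  forall X : C, exists! f : Hom X T, True.

Definition finitely_complete (C : Category) : Prop :=
  (exists T : C, is_terminal T) /\
  forall (A B Z : C) (f : Hom A Z) (g : Hom B Z),
    exists (P : C) (pa : Hom P A) (pb : Hom P B), is_pullback pa pb f g.

Lemma comp_eq_r {C : Category} {a b b' c d : C}
  (f : Hom b c) (g : Hom a b) (h : Hom b' c) (k : Hom a b') :
  f ∘ g = h ∘ k -> forall (x : Hom d a), f ∘ (g ∘ x) = h ∘ (k ∘ x).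
Proof. intros E x. rewrite !comp_assoc, E. reflexivity. Qed.

(* ic1 = object of arrows, ic0 = object of objects,
   ic2 = object of composable pairs (f,g) with t f = s g (a pullback),
   ic_m (f,g) = "g after f". *)
Record InternalCat (C : Category) := {
  ic0 : C; ic1 : C; ic2 : C;
  ic_s : Hom ic1 ic0; ic_t : Hom ic1 ic0; ic_e : Hom ic0 ic1;
  ic_p1 : Hom ic2 ic1; ic_p2 : Hom ic2 ic1;
  ic_m : Hom ic2 ic1;
  ic_pb : is_pullback ic_p1 ic_p2 ic_t ic_s;
  ic_se : ic_s ∘ ic_e = idm ic0;
  ic_te : ic_t ∘ ic_e = idm ic0;
  ic_sm : ic_s ∘ ic_m = ic_s ∘ ic_p1;
  ic_tm : ic_t ∘ ic_m = ic_t ∘ ic_p2;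
  ic_unit_l : forall (T : C) (f : Hom T ic1) (u : Hom T ic2),
      ic_p1 ∘ u = ic_e ∘ (ic_s ∘ f) -> ic_p2 ∘ u = f -> ic_m ∘ u = f;
  ic_unit_r : forall (T : C) (f : Hom T ic1) (u : Hom T ic2),
      ic_p1 ∘ u = f -> ic_p2 ∘ u = ic_e ∘ (ic_t ∘ f) -> ic_m ∘ u = f;
  (* ((f,g),h) : u12 = (f,g), u23 = (g,h), u123 = (m(f,g),h), u1_23 = (f,m(g,h)) *)
  ic_assoc : forall (T : C) (u12 u23 u123 u1_23 : Hom T ic2),
      ic_p2 ∘ u12 = ic_p1 ∘ u23 ->
      ic_p1 ∘ u123 = ic_m ∘ u12 -> ic_p2 ∘ u123 = ic_p2 ∘ u23 ->
      ic_p1 ∘ u1_23 = ic_p1 ∘ u12 -> ic_p2 ∘ u1_23 = ic_m ∘ u23 ->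
      ic_m ∘ u123 = ic_m ∘ u1_23 }.

Arguments ic0 {C} _. Arguments ic1 {C} _. Arguments ic2 {C} _.
Arguments ic_s {C} _. Arguments ic_t {C} _. Arguments ic_e {C} _.
Arguments ic_p1 {C} _. Arguments ic_p2 {C} _. Arguments ic_m {C} _.
Arguments ic_pb {C} _.

Record IFunctor {C : Category} (X Y : InternalCat C) := {
  if0 : Hom (ic0 X) (ic0 Y);
  if1 : Hom (ic1 X) (ic1 Y);
  if_s : ic_s Y ∘ if1 = if0 ∘ ic_s X;
  if_t : ic_t Y ∘ if1 = if0 ∘ ic_t X;
  if_e : if1 ∘ ic_e X = ic_e Y ∘ if0;
  if_m : forall (T : C) (u : Hom T (ic2 X)) (v : Hom T (ic2 Y)),
      ic_p1 Y ∘ v = if1 ∘ (ic_p1 X ∘ u) ->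
      ic_p2 Y ∘ v = if1 ∘ (ic_p2 X ∘ u) ->
      if1 ∘ (ic_m X ∘ u) = ic_m Y ∘ v }.

Arguments if0 {C X Y} _. Arguments if1 {C X Y} _.
Arguments if_s {C X Y} _. Arguments if_t {C X Y} _.
Arguments if_e {C X Y} _. Arguments if_m {C X Y} _.

Lemma IFunctor_eq {C : Category} {X Y : InternalCat C} (F G : IFunctor X Y) :
  if0 F = if0 G -> if1 F = if1 G -> F = G.
Proof.
  destruct F as [F0 F1 a b c d], G as [G0 G1 a' b' c' d']; simpl.
  intros -> ->. f_equal; apply proof_irrelevance.
Qed.

Section CatC.
Variable C : Category.

Definition if_id (X : InternalCat C) : IFunctor X X.
Proof.
  refine {| if0 := idm (ic0 X); if1 := idm (ic1 X) |}.
  - rewrite comp_id_l, comp_id_r; reflexivity.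
  - rewrite comp_id_l, comp_id_r; reflexivity.
  - rewrite comp_id_l, comp_id_r; reflexivity.
  - intros T u v H1 H2. rewrite comp_id_l in *.
    assert (v = u) as ->; [|reflexivity].
    destruct (proj2 (ic_pb X) T (ic_p1 X ∘ u) (ic_p2 X ∘ u)) as [w [_ Hw]].
    { rewrite !comp_assoc. f_equal. exact (proj1 (ic_pb X)). }
    transitivity w; [symmetry|]; apply Hw; auto.
Defined.

Definition if_comp {X Y Z : InternalCat C} (G : IFunctor Y Z) (F : IFunctor X Y)
  : IFunctor X Z.
Proof.
  refine {| if0 := if0 G ∘ if0 F; if1 := if1 G ∘ if1 F |}.
  - rewrite comp_assoc, (if_s G), <- comp_assoc, (if_s F), comp_assoc.
    reflexivity.
  - rewrite comp_assoc, (if_t G), <- comp_assoc, (if_t F), comp_assoc.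
    reflexivity.
  - rewrite <- comp_assoc, (if_e F), comp_assoc, (if_e G), <- comp_assoc.
    reflexivity.
  - intros T u v H1 H2.
    destruct (proj2 (ic_pb Y) T (if1 F ∘ (ic_p1 X ∘ u)) (if1 F ∘ (ic_p2 X ∘ u)))
      as [w [[Hw1 Hw2] _]].
    { rewrite (comp_eq_r _ _ _ _ (if_t F)), (comp_eq_r _ _ _ _ (if_s F)).
      f_equal. rewrite !comp_assoc. f_equal. exact (proj1 (ic_pb X)). }
    rewrite <- comp_assoc, (if_m F T u w Hw1 Hw2).
    apply (if_m G).
    + rewrite H1, Hw1. symmetry; apply comp_assoc.
    + rewrite H2, Hw2. symmetry; apply comp_assoc.
Defined.

Definition CatC : Category.
Proof.
  refine {| Ob := InternalCat C; Hom := fun X Y => IFunctor X Y;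
            idm := if_id; comp := fun X Y Z G F => if_comp G F |}.
  - intros; apply IFunctor_eq; simpl; apply comp_assoc.
  - intros; apply IFunctor_eq; simpl; apply comp_id_l.
  - intros; apply IFunctor_eq; simpl; apply comp_id_r.
Defined.

End CatC.

(* A descent datum for p : E -> B (an algebra for the monad p^* Sigma_p):
   an object a : A -> E over E, a pullback P = E x_B A of p along p∘a
   (projections dd_p1 : P -> E, dd_p2 : P -> A) and an action
   xi : P -> A over E, satisfying unit and associativity. *)
Record DescentDatum {D : Category} {E B : D} (p : Hom E B) := {
  dd_ob : D;
  dd_map : Hom dd_ob E;
  dd_P : D;
  dd_p1 : Hom dd_P E;
  dd_p2 : Hom dd_P dd_ob;
  dd_pb : is_pullback dd_p1 dd_p2 p (p ∘ dd_map);
  dd_act : Hom dd_P dd_ob;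
  dd_act_over : dd_map ∘ dd_act = dd_p1;
  dd_unit : forall (T : D) (x : Hom T dd_ob) (u : Hom T dd_P),
      dd_p1 ∘ u = dd_map ∘ x -> dd_p2 ∘ u = x -> dd_act ∘ u = x;
  dd_assoc : forall (T : D) (u1 u2 u3 : Hom T dd_P),
      dd_p1 ∘ u2 = dd_p1 ∘ u3 ->
      dd_p2 ∘ u2 = dd_act ∘ u1 ->
      dd_p2 ∘ u3 = dd_p2 ∘ u1 ->
      dd_act ∘ u2 = dd_act ∘ u3 }.

Arguments dd_ob {D E B p} _. Arguments dd_map {D E B p} _.
Arguments dd_P {D E B p} _. Arguments dd_p1 {D E B p} _.
Arguments dd_p2 {D E B p} _. Arguments dd_act {D E B p} _.

Definition dd_morphism {D : Category} {E B : D} {p : Hom E B}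
  (d d' : DescentDatum p) (g : Hom (dd_ob d) (dd_ob d')) : Prop :=
  dd_map d' ∘ g = dd_map d /\
  forall (T : D) (u : Hom T (dd_P d)) (v : Hom T (dd_P d')),
    dd_p1 d' ∘ v = dd_p1 d ∘ u -> dd_p2 d' ∘ v = g ∘ (dd_p2 d ∘ u) ->
    g ∘ (dd_act d ∘ u) = dd_act d' ∘ v.

(* d is (a representative of) the image of q : X -> B under the comparison
   functor p^* : D/B -> Desc(p): dd_ob d is a pullback of q along p (with
   projection pi to X), and the action is the canonical one. *)
Definition is_comparison_of {D : Category} {E B X : D} {p : Hom E B}
  (q : Hom X B) (d : DescentDatum p) (pi : Hom (dd_ob d) X) : Prop :=
  is_pullback (dd_map d) pi p q /\ pi ∘ dd_act d = pi ∘ dd_p2 d.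

(* p is an effective descent morphism: the comparison functor
   p^* : D/B -> Desc(p) is an equivalence, i.e. fully faithful and
   essentially surjective. *)
Definition effective_descent {D : Category} {E B : D} (p : Hom E B) : Prop :=
  (forall (X Y : D) (q : Hom X B) (r : Hom Y B) (d d' : DescentDatum p)
          (piX : Hom (dd_ob d) X) (piY : Hom (dd_ob d') Y),
      is_comparison_of q d piX -> is_comparison_of r d' piY ->
      forall g : Hom (dd_ob d) (dd_ob d'), dd_morphism d d' g ->
      exists! h : Hom X Y, r ∘ h = q /\ piY ∘ g = h ∘ piX) /\
  (forall d : DescentDatum p,
      exists (X : D) (q : Hom X B) (d' : DescentDatum p) (pi : Hom (dd_ob d') X)
             (g : Hom (dd_ob d) (dd_ob d')) (g' : Hom (dd_ob d') (dd_ob d)),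
        is_comparison_of q d' pi /\ dd_morphism d d' g /\ dd_morphism d' d g' /\
        g' ∘ g = idm _ /\ g ∘ g' = idm _).

Definition discrete_opfibration {C : Category} {X K : InternalCat C}
  (p : IFunctor X K) : Prop :=
  is_pullback (ic_s X) (if1 p) (if0 p) (ic_s K).

(* Main.v *)
Require Import Defs.

Ltac ra := repeat rewrite <- comp_assoc.
Lemma comp_eq_r1 {C : Category} {a b c d : C} (f : Hom b c) (g : Hom a b) (h : Hom a c) :
  f ∘ g = h -> forall (x : Hom d a), f ∘ (g ∘ x) = h ∘ x.
Proof. intros E x. rewrite comp_assoc, E. reflexivity. Qed.
Tactic Notation "rw" constr(E) := first [rewrite (comp_eq_r _ _ _ _ E) | rewrite (comp_eq_r1 _ _ _ E) | rewrite E].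
Tactic Notation "rwl" constr(E) := first [rewrite <- (comp_eq_r _ _ _ _ E) | rewrite <- (comp_eq_r1 _ _ _ E) | rewrite <- E].

Lemma pb_uniq {C : Category} {P A B Z T : C} {pa : Hom P A} {pb : Hom P B} {f g}
  (Hp : @is_pullback C P A B Z pa pb f g) (u v : Hom T P) :
  pa ∘ u = pa ∘ v -> pb ∘ u = pb ∘ v -> u = v.
Proof.
  intros H1 H2. destruct Hp as [Hc Hu].
  destruct (Hu T (pa ∘ v) (pb ∘ v)) as [w [_ Hw]].
  { rewrite !comp_assoc, Hc; reflexivity. }
  transitivity w; [symmetry|]; apply Hw; auto.
Qed.

Lemma pb_ex {C : Category} {P A B Z T : C} {pa : Hom P A} {pb : Hom P B} {f : Hom A Z} {g}
  (Hp : is_pullback pa pb f g) (x : Hom T A) (y : Hom T B) :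
  f ∘ x = g ∘ y -> exists u, pa ∘ u = x /\ pb ∘ u = y.
Proof. intros E. destruct (proj2 Hp T x y E) as [u [Hu _]]. eauto. Qed.

Lemma pb_sym {C : Category} {P A B Z : C} {pa : Hom P A} {pb : Hom P B} {f : Hom A Z} {g : Hom B Z} :
  is_pullback pa pb f g -> is_pullback pb pa g f.
Proof.
  intros [Hc Hu]. split; [symmetry; exact Hc|].
  intros T x y E. destruct (Hu T y x (eq_sym E)) as [u [[H1 H2] U]].
  exists u. split; [auto|]. intros u' [H1' H2']. apply U; auto.
Qed.

Section Reflect.
Variable D : Category.
Variable HD : forall (A B Z : D) (f : Hom A Z) (g : Hom B Z),
    exists (P : D) (pa : Hom P A) (pb : Hom P B), is_pullback pa pb f g.

Definition mk_dd {E B Y Y' : D} (p : Hom E B) (q : Hom Y B) (a : Hom Y' E) (pi : Hom Y' Y)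
  (Hpb : is_pullback a pi p q) (P : D) (r1 : Hom P E) (r2 : Hom P Y')
  (HP : is_pullback r1 r2 p (p ∘ a)) (act : Hom P Y') (Ha1 : a ∘ act = r1)
  (Ha2 : pi ∘ act = pi ∘ r2) : DescentDatum p.
Proof.
  refine {| dd_ob := Y'; dd_map := a; dd_P := P; dd_p1 := r1; dd_p2 := r2;
            dd_pb := HP; dd_act := act; dd_act_over := Ha1 |}.
  - intros T x u H1 H2. apply (pb_uniq Hpb).
    + rw Ha1. rewrite H1. reflexivity.
    + rw Ha2. rewrite H2. reflexivity.
  - intros T u1 u2 u3 H1 H2 H3. apply (pb_uniq Hpb).
    + rw Ha1. rw Ha1. exact H1.
    + rw Ha2. rw Ha2. rewrite H2, H3. rw Ha2. reflexivity.
Defined.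

Lemma mk_dd_comp {E B Y Y' : D} (p : Hom E B) (q : Hom Y B) (a : Hom Y' E) (pi : Hom Y' Y)
  Hpb P r1 r2 HP act Ha1 Ha2 :
  is_comparison_of q (@mk_dd E B Y Y' p q a pi Hpb P r1 r2 HP act Ha1 Ha2) pi.
Proof. split; simpl; auto. Qed.



Lemma dd_morph_inv {E B : D} {p : Hom E B} (d d' : DescentDatum p) g g' :
  dd_morphism d d' g -> g' ∘ g = idm _ -> g ∘ g' = idm _ -> dd_morphism d' d g'.
Proof.
  intros [Hm Ha] Hgg Hg'g. split.
  - rewrite <- Hm, <- comp_assoc, Hg'g, comp_id_r. reflexivity.
  - intros T u v H1 H2. specialize (Ha T v u (eq_sym H1)).
    rewrite H2, comp_assoc, Hg'g, comp_id_l in Ha. specialize (Ha eq_refl).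
    rewrite <- Ha, comp_assoc, Hgg, comp_id_l. reflexivity.
Qed.

Lemma dd_morph_id {E B : D} {p : Hom E B} (d : DescentDatum p) : dd_morphism d d (idm _).
Proof.
  split; [apply comp_id_r|]. intros T u v H1 H2. rewrite comp_id_l in *.
  assert (u = v) as ->; [|reflexivity].
  apply (pb_uniq (dd_pb _ d)); auto.
Qed.


Lemma reflect_iso {E B Y Z : D} (p : Hom E B) (Hp : effective_descent p)
  (q : Hom Y B) (r : Hom Z B) (f : Hom Y Z) (Hf : r ∘ f = q)
  (Y' Z' : D) (ay : Hom Y' E) (piy : Hom Y' Y) (Hy : is_pullback ay piy p q)
  (az : Hom Z' E) (piz : Hom Z' Z) (Hz : is_pullback az piz p r)
  (f' : Hom Y' Z') (g' : Hom Z' Y') (Hf1 : az ∘ f' = ay) (Hf2 : piz ∘ f' = f ∘ piy)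
  (Hfg : f' ∘ g' = idm _) (Hgf : g' ∘ f' = idm _) :
  exists h : Hom Z Y, h ∘ f = idm _ /\ f ∘ h = idm _.
Proof.
  destruct (HD _ _ _ p (p ∘ ay)) as [PY [ry1 [ry2 HPY]]].
  destruct (pb_ex Hy ry1 (piy ∘ ry2)) as [acty [Hay1 Hay2]].
  { rewrite (proj1 HPY). ra. rw (proj1 Hy). reflexivity. }
  destruct (HD _ _ _ p (p ∘ az)) as [PZ [rz1 [rz2 HPZ]]].
  destruct (pb_ex Hz rz1 (piz ∘ rz2)) as [actz [Haz1 Haz2]].
  { rewrite (proj1 HPZ). ra. rw (proj1 Hz). reflexivity. }
  assert (Hay2' : piy ∘ acty = piy ∘ ry2) by exact Hay2.
  assert (Haz2' : piz ∘ actz = piz ∘ rz2) by exact Haz2.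
  set (dY := mk_dd p q ay piy Hy PY ry1 ry2 HPY acty Hay1 Hay2').
  set (dZ := mk_dd p r az piz Hz PZ rz1 rz2 HPZ actz Haz1 Haz2').
  assert (Hm : dd_morphism dY dZ f').
  { split; [exact Hf1|]. simpl. intros T u v H1 H2.
    apply (pb_uniq Hz).
    - rw Hf1. rw Haz1. rw Hay1. auto.
    - rw Hf2. rw Hay2. rw Haz2. rewrite H2. rw Hf2. reflexivity. }
  assert (Hm' : dd_morphism dZ dY g') by (apply (dd_morph_inv dY dZ f'); auto).
  destruct (proj1 Hp Z Y r q dZ dY piz piy (mk_dd_comp _ _ _ _ _ _ _ _ _ _ _ _)
              (mk_dd_comp _ _ _ _ _ _ _ _ _ _ _ _) g' Hm') as [h [[Hh1 Hh2] _]]. simpl in Hh2.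
  exists h. split.
  - destruct (proj1 Hp Y Y q q dY dY piy piy (mk_dd_comp _ _ _ _ _ _ _ _ _ _ _ _)
              (mk_dd_comp _ _ _ _ _ _ _ _ _ _ _ _) (idm _) (dd_morph_id dY)) as [h0 [_ U]].
    simpl in U. rewrite <- (U (idm _)), <- (U (h ∘ f)); auto.
    + split.
      * rewrite comp_assoc, Hh1. exact Hf.
      * rewrite comp_id_r, <- comp_assoc, <- Hf2, comp_assoc, <- Hh2, <- comp_assoc, Hgf, comp_id_r. reflexivity.
    + split; rewrite ?comp_id_l, ?comp_id_r; reflexivity.
  - destruct (proj1 Hp Z Z r r dZ dZ piz piz (mk_dd_comp _ _ _ _ _ _ _ _ _ _ _ _)
              (mk_dd_comp _ _ _ _ _ _ _ _ _ _ _ _) (idm _) (dd_morph_id dZ)) as [h0 [_ U]].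
    simpl in U. rewrite <- (U (idm _)), <- (U (f ∘ h)); auto.
    + split.
      * rewrite comp_assoc, Hf. exact Hh1.
      * rewrite comp_id_r, <- comp_assoc, <- Hh2, comp_assoc, <- Hf2, <- comp_assoc, Hfg, comp_id_r. reflexivity.
    + split; rewrite ?comp_id_l, ?comp_id_r; reflexivity.
Qed.

End Reflect.

Section Cone.
Variables (C : Category) (HC : finitely_complete C) (X H K : InternalCat C)
  (p : IFunctor X K) (Phi : IFunctor H K).

Lemma cone : exists (P : InternalCat C) (piX : IFunctor P X) (piH : IFunctor P H),
  if_comp C p piX = if_comp C Phi piH /\
  is_pullback (if1 piX) (if1 piH) (if1 p) (if1 Phi) /\
  is_pullback (if0 piX) (if0 piH) (if0 p) (if0 Phi).
Proof.
  destruct (proj2 HC _ _ _ (if0 p) (if0 Phi)) as [P0 [a0 [b0 HP0]]].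
  destruct (proj2 HC _ _ _ (if1 p) (if1 Phi)) as [P1 [a1 [b1 HP1]]].
  pose proof (proj1 HP0) as C0. pose proof (proj1 HP1) as C1.
  destruct (pb_ex HP0 (ic_s X ∘ a1) (ic_s H ∘ b1)) as [sP [Hs1 Hs2]].
  { rwl (if_s p). rw C1. rw (if_s Phi). reflexivity. }
  destruct (pb_ex HP0 (ic_t X ∘ a1) (ic_t H ∘ b1)) as [tP [Ht1 Ht2]].
  { rwl (if_t p). rw C1. rw (if_t Phi). reflexivity. }
  destruct (pb_ex HP1 (ic_e X ∘ a0) (ic_e H ∘ b0)) as [eP [He1 He2]].
  { rw (if_e p). rw C0. rwl (if_e Phi). reflexivity. }
  destruct (proj2 HC _ _ _ tP sP) as [P2 [q1 [q2 HP2]]].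
  pose proof (proj1 HP2) as C2.
  destruct (pb_ex (ic_pb X) (a1 ∘ q1) (a1 ∘ q2)) as [wX [HwX1 HwX2]].
  { rwl Ht1. rw C2. rw Hs1. reflexivity. }
  destruct (pb_ex (ic_pb H) (b1 ∘ q1) (b1 ∘ q2)) as [wH [HwH1 HwH2]].
  { rwl Ht2. rw C2. rw Hs2. reflexivity. }
  destruct (pb_ex (ic_pb K) (if1 p ∘ (a1 ∘ q1)) (if1 p ∘ (a1 ∘ q2))) as [vK [HvK1 HvK2]].
  { rw (if_t p). rw (if_s p). rwl Ht1. rw C2. rw Hs1. reflexivity. }
  destruct (pb_ex HP1 (ic_m X ∘ wX) (ic_m H ∘ wH)) as [mP [Hm1 Hm2]].
  { rewrite (if_m p _ wX vK); [|rewrite HvK1, HwX1; reflexivity|rewrite HvK2, HwX2; reflexivity].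
    rewrite (if_m Phi _ wH vK); [reflexivity| |].
    - rewrite HvK1, HwH1. rw C1. reflexivity.
    - rewrite HvK2, HwH2. rw C1. reflexivity. }
  assert (Hse : sP ∘ eP = idm P0).
  { apply (pb_uniq HP0).
    - rw Hs1. rw He1. rw (ic_se _ X). rewrite comp_id_l, comp_id_r. reflexivity.
    - rw Hs2. rw He2. rw (ic_se _ H). rewrite comp_id_l, comp_id_r. reflexivity. }
  assert (Hte : tP ∘ eP = idm P0).
  { apply (pb_uniq HP0).
    - rw Ht1. rw He1. rw (ic_te _ X). rewrite comp_id_l, comp_id_r. reflexivity.
    - rw Ht2. rw He2. rw (ic_te _ H). rewrite comp_id_l, comp_id_r. reflexivity. }
  assert (Hsm : sP ∘ mP = sP ∘ q1).
  { apply (pb_uniq HP0).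
    - rw Hs1. rw Hm1. rw (ic_sm _ X). rw HwX1. rw Hs1. reflexivity.
    - rw Hs2. rw Hm2. rw (ic_sm _ H). rw HwH1. rw Hs2. reflexivity. }
  assert (Htm : tP ∘ mP = tP ∘ q2).
  { apply (pb_uniq HP0).
    - rw Ht1. rw Hm1. rw (ic_tm _ X). rw HwX2. rw Ht1. reflexivity.
    - rw Ht2. rw Hm2. rw (ic_tm _ H). rw HwH2. rw Ht2. reflexivity. }
  assert (Hul : forall (T : C) (f : Hom T P1) (u : Hom T P2),
      q1 ∘ u = eP ∘ (sP ∘ f) -> q2 ∘ u = f -> mP ∘ u = f).
  { intros T f u Hu1 Hu2. apply (pb_uniq HP1).
    - rw Hm1. apply (ic_unit_l _ X).
      + rw HwX1. rewrite Hu1. rw He1. rw Hs1. reflexivity.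
      + rw HwX2. rewrite Hu2. reflexivity.
    - rw Hm2. apply (ic_unit_l _ H).
      + rw HwH1. rewrite Hu1. rw He2. rw Hs2. reflexivity.
      + rw HwH2. rewrite Hu2. reflexivity. }
  assert (Hur : forall (T : C) (f : Hom T P1) (u : Hom T P2),
      q1 ∘ u = f -> q2 ∘ u = eP ∘ (tP ∘ f) -> mP ∘ u = f).
  { intros T f u Hu1 Hu2. apply (pb_uniq HP1).
    - rw Hm1. apply (ic_unit_r _ X).
      + rw HwX1. rewrite Hu1. reflexivity.
      + rw HwX2. rewrite Hu2. rw He1. rw Ht1. reflexivity.
    - rw Hm2. apply (ic_unit_r _ H).
      + rw HwH1. rewrite Hu1. reflexivity.
      + rw HwH2. rewrite Hu2. rw He2. rw Ht2. reflexivity. }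
  assert (Has : forall (T : C) (u12 u23 u123 u1_23 : Hom T P2),
      q2 ∘ u12 = q1 ∘ u23 ->
      q1 ∘ u123 = mP ∘ u12 -> q2 ∘ u123 = q2 ∘ u23 ->
      q1 ∘ u1_23 = q1 ∘ u12 -> q2 ∘ u1_23 = mP ∘ u23 ->
      mP ∘ u123 = mP ∘ u1_23).
  { intros T u12 u23 u123 u1_23 A1 A2 A3 A4 A5. apply (pb_uniq HP1).
    - rw Hm1. rw Hm1. apply (ic_assoc _ X T (wX ∘ u12) (wX ∘ u23)).
      + rw HwX2. rw HwX1. rewrite A1. reflexivity.
      + rw HwX1. rewrite A2. rw Hm1. reflexivity.
      + rw HwX2. rw HwX2. rewrite A3. reflexivity.
      + rw HwX1. rw HwX1. rewrite A4. reflexivity.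
      + rw HwX2. rewrite A5. rw Hm1. reflexivity.
    - rw Hm2. rw Hm2. apply (ic_assoc _ H T (wH ∘ u12) (wH ∘ u23)).
      + rw HwH2. rw HwH1. rewrite A1. reflexivity.
      + rw HwH1. rewrite A2. rw Hm2. reflexivity.
      + rw HwH2. rw HwH2. rewrite A3. reflexivity.
      + rw HwH1. rw HwH1. rewrite A4. reflexivity.
      + rw HwH2. rewrite A5. rw Hm2. reflexivity. }
  pose (P := Build_InternalCat C P0 P1 P2 sP tP eP q1 q2 mP HP2 Hse Hte Hsm Htm Hul Hur Has).
  assert (FmX : forall (T : C) (u : Hom T (ic2 P)) (v : Hom T (ic2 X)),
      ic_p1 X ∘ v = a1 ∘ (ic_p1 P ∘ u) ->
      ic_p2 X ∘ v = a1 ∘ (ic_p2 P ∘ u) ->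
      a1 ∘ (ic_m P ∘ u) = ic_m X ∘ v).
  { simpl. intros T u v V1 V2. rw Hm1. f_equal. apply (pb_uniq (ic_pb X)).
    - rw HwX1. auto.
    - rw HwX2. auto. }
  assert (FmH : forall (T : C) (u : Hom T (ic2 P)) (v : Hom T (ic2 H)),
      ic_p1 H ∘ v = b1 ∘ (ic_p1 P ∘ u) ->
      ic_p2 H ∘ v = b1 ∘ (ic_p2 P ∘ u) ->
      b1 ∘ (ic_m P ∘ u) = ic_m H ∘ v).
  { simpl. intros T u v V1 V2. rw Hm2. f_equal. apply (pb_uniq (ic_pb H)).
    - rw HwH1. auto.
    - rw HwH2. auto. }
  exists P.
  exists (@Build_IFunctor C P X a0 a1 (eq_sym Hs1) (eq_sym Ht1) He1 FmX).
  exists (@Build_IFunctor C P H b0 b1 (eq_sym Hs2) (eq_sym Ht2) He2 FmH).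
  split; [|split; assumption].
  apply IFunctor_eq; simpl; assumption.
Qed.
End Cone.

Theorem lemma5p3 (C : Category) (HC : finitely_complete C)
  (H K : InternalCat C) (Phi : IFunctor H K)
  (HPhi : @effective_descent (CatC C) H K Phi)
  (HPhi1 : effective_descent (if1 Phi))
  (X : InternalCat C) (p : IFunctor X K)
  (Hpb : exists (X' : InternalCat C) (p' : IFunctor X' H) (Phi' : IFunctor X' X),
      @is_pullback (CatC C) X' X H K Phi' p' p Phi /\ discrete_opfibration p') :
  discrete_opfibration p.
Proof.
  destruct Hpb as [X' [p' [Phi' [[Hcomm Huniv] Hdo]]]].
  unfold discrete_opfibration in *.
  destruct (cone C HC X H K p Phi) as [P [piX [piH [Hc [Hpb1 Hpb0]]]]].
  destruct (Huniv P piX piH Hc) as [U [[HU1 HU2] _]].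
  assert (Hc1 : if1 p ∘ if1 Phi' = if1 Phi ∘ if1 p') by exact (f_equal (@if1 C _ _) Hcomm).
  assert (HU10 : if0 Phi' ∘ if0 U = if0 piX) by exact (f_equal (@if0 C _ _) HU1).
  assert (HU11 : if1 Phi' ∘ if1 U = if1 piX) by exact (f_equal (@if1 C _ _) HU1).
  assert (HU20 : if0 p' ∘ if0 U = if0 piH) by exact (f_equal (@if0 C _ _) HU2).
  assert (HU21 : if1 p' ∘ if1 U = if1 piH) by exact (f_equal (@if1 C _ _) HU2).
  clear HU1 HU2 Hcomm Huniv Hc.
  destruct (proj2 HC _ _ _ (if0 p) (ic_s K)) as [Q [qa [qb HQ]]].
  destruct (pb_ex HQ (ic_s X) (if1 p)) as [c [Hc1' Hc2']].
  { symmetry; exact (if_s p). }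
  destruct (proj2 HC _ _ _ (if1 Phi) qb) as [Z' [za [zpi HZ]]].
  pose proof (pb_sym Hpb1) as Hy.
  destruct (pb_ex HZ (if1 piH) (c ∘ if1 piX)) as [f' [Hf1 Hf2]].
  { rw Hc2'. symmetry. exact (proj1 Hpb1). }
  destruct (pb_ex Hpb0 (qa ∘ zpi) (ic_s H ∘ za)) as [w0 [Hw1 Hw2]].
  { rw (proj1 HQ). rewrite <- (proj1 HZ). rw (if_s Phi). reflexivity. }
  destruct (pb_ex Hdo (if0 U ∘ w0) za) as [z [Hz1 Hz2]].
  { rw HU20. exact Hw2. }
  destruct (pb_ex Hpb1 (if1 Phi' ∘ z) za) as [g' [Hg1 Hg2]].
  { rw Hc1. rewrite Hz2. reflexivity. }
  assert (Hfg : f' ∘ g' = idm Z').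
  { apply (pb_uniq HZ).
    - rw Hf1. rewrite Hg2, comp_id_r. reflexivity.
    - rw Hf2. rw Hg1. rewrite comp_id_r. apply (pb_uniq HQ).
      + rw Hc1'. rw (if_s Phi'). rewrite Hz1. rw HU10. exact Hw1.
      + rw Hc2'. rw Hc1. rewrite Hz2. exact (proj1 HZ). }
  assert (Hgf : g' ∘ f' = idm (ic1 P)).
  { assert (zf : z ∘ f' = if1 U).
    { apply (pb_uniq Hdo).
      - rw Hz1. rewrite (if_s U). f_equal. apply (pb_uniq Hpb0).
        + rw Hw1. rw Hf2. rw Hc1'. exact (if_s piX).
        + rw Hw2. rw Hf1. exact (if_s piH).
      - rw Hz2. rewrite Hf1, HU21. reflexivity. }
    apply (pb_uniq Hpb1).
    - rw Hg1. rewrite comp_id_r, zf. exact HU11.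
    - rw Hg2. rewrite Hf1, comp_id_r. reflexivity. }
  destruct (reflect_iso C (proj2 HC) (if1 Phi) HPhi1 (if1 p) qb c Hc2' (ic1 P) Z'
              (if1 piH) (if1 piX) Hy za zpi HZ f' g' Hf1 Hf2 Hfg Hgf) as [h [Hh1 Hh2]].
  split; [symmetry; exact (if_s p)|].
  intros T x y E.
  destruct (pb_ex HQ x y E) as [k [Hk1 Hk2]].
  exists (h ∘ k). split.
  - split.
    + rewrite <- Hc1'. ra. rewrite (comp_assoc c h k), Hh2, comp_id_l. exact Hk1.
    + rewrite <- Hc2'. ra. rewrite (comp_assoc c h k), Hh2, comp_id_l. exact Hk2.
  - intros u [Hu1 Hu2].
    assert (k = c ∘ u) as ->.
    { apply (pb_uniq HQ).
      - rw Hc1'. rewrite Hk1, Hu1. reflexivity.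
      - rw Hc2'. rewrite Hk2, Hu2. reflexivity. }
    rewrite comp_assoc, Hh1, comp_id_l. reflexivity.
Qed.
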